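(* Let $w$ be an instance of Metric-MAXCUT on a finite set $V$, let $\gamma\ge1$ and let $(L,R)$ be a $\gamma$-locally stable cut. Then for every $x\in L$ and $z\in R$, $$w(x,z)\ge\left(\frac{\gamma^2-1}{\gamma}\right)\cdot\frac{w(x,R)}{\gamma|R|+|L|}.$$
   Context: An instance of Metric-MAXCUT is a finite set $V$ with a metric $w$. For $x\in V$ and $B\subseteq V$, $w(x,B)=\sum_{b\in B}w(x,b)$. A cut $(L,R)$ (partition of $V$, not necessarily maximal) is $\gamma$-locally stable if for every vertex $x$ the total weight of edges from $x$ to the opposite side is at least $\gamma$ times the total weight of edges from $x$ to its own side, i.e. $w(x,R)\ge\gamma w(x,L)$ for $x\in L$ and $w(z,L)\ge\gamma w(z,R)$ for $z\in R$. *)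

(* Defs.v *)
From mathcomp Require Import all_boot all_order all_algebra.
Set Implicit Arguments. Unset Strict Implicit. Unset Printing Implicit Defensive.
Import Order.TTheory GRing.Theory Num.Theory.
Local Open Scope ring_scope.

Definition is_metric (R : realFieldType) (V : finType) (w : V -> V -> R) : Prop :=
  [/\ forall x y, w x y = 0 <-> x = y,
      forall x y, 0 <= w x y,
      forall x y, w x y = w y x
    & forall x y z, w x z <= w x y + w y z].

Definition wset (R : realFieldType) (V : finType) (w : V -> V -> R)
  (x : V) (B : {set V}) : R := \sum_(b in B) w x b.

Definition locally_stable (R : realFieldType) (V : finType) (w : V -> V -> R)
  (gamma : R) (L Rs : {set V}) : Prop :=
  (forall x, x \in L -> wset w x Rs >= gamma * wset w x L) /\
  (forall z, z \in Rs -> wset w z L >= gamma * wset w z Rs).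

(* Main.v *)
Require Import Defs.
From mathcomp Require Import all_boot all_order all_algebra.
From mathcomp Require Import ring lra.
Import Order.TTheory GRing.Theory Num.Theory.
Local Open Scope ring_scope.

Theorem proposition3 (R : realFieldType) (V : finType) (w : V -> V -> R)
  (gamma : R) (L Rs : {set V}) :
  is_metric w -> 1 <= gamma ->
  Rs = ~: L ->
  locally_stable w gamma L Rs ->
  forall x z, x \in L -> z \in Rs ->
    w x z >= ((gamma ^+ 2 - 1) / gamma) *
             (wset w x Rs / (gamma * #|Rs|%:R + #|L|%:R)).
Proof.
move=> [_ w0 ws wt] g1 HR [sL sR] x z xL zR.
set a := w x z.
have h1 : wset w z L <= wset w x L + a * #|L|%:R.
  rewrite /wset mulr_natr -sumr_const -big_split /=; apply: ler_sum => y _.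
  have := wt z x y; rewrite (ws z x) /a; lra.
have h2 : wset w x Rs - a * #|Rs|%:R <= wset w z Rs.
  rewrite /wset mulr_natr -sumr_const -sumrB /=; apply: ler_sum => y _.
  have := wt x z y; rewrite /a; lra.
have hx := sL x xL.
have hz := sR z zR.
set S := wset w x Rs in h2 hx *.
set WL := wset w x L in h1 hx.
set l := #|L|%:R in h1 *.
set r := #|Rs|%:R in h2 *.
have l1 : 1 <= l.
  rewrite /l ler1n; apply/card_gt0P; by exists x.
have r0 : 0 <= r by rewrite /r ler0n.
have g0 : 0 < gamma by lra.
have D0 : 0 < gamma * r + l.
  have : 0 <= gamma * r by rewrite mulr_ge0 //; lra.
  lra.
have key : a * (gamma * r + l) >= gamma * S - WL.
  have : gamma * (S - a * r) <= wset w z L.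
    apply: le_trans hz; rewrite ler_wpM2l //; lra.
  lra.
have key2 : (gamma ^+ 2 - 1) * S <= a * (gamma * r + l) * gamma.
  have e : (gamma ^+ 2 - 1) * S = gamma * (gamma * S - WL) + (gamma * WL - S) by ring.
  rewrite e.
  have : gamma * (gamma * S - WL) <= a * (gamma * r + l) * gamma.
    by rewrite mulrC ler_wpM2r //; lra.
  lra.
have -> : (gamma ^+ 2 - 1) / gamma * (S / (gamma * r + l)) =
   ((gamma ^+ 2 - 1) * S) / ((gamma * r + l) * gamma).
  by rewrite mulf_div (mulrC gamma).
rewrite ler_pdivrMr; last by rewrite mulr_gt0.
rewrite mulrA; exact: key2.
Qed.
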